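(* For any integer $n>1$ and any integer $1\le m\le n(n-1)$, the numbers $\lceil \frac{m}{n-1}\rceil$ and $n-((m-1)\bmod n)$ are two distinct integers in $\{1,\dots,n\}$.
   Context: $a\bmod b$ denotes the remainder of $a$ upon division by $b$, lying in $\{0,\dots,b-1\}$. *)

(* Defs.v *)
From mathcomp Require Import all_boot.
Set Implicit Arguments. Unset Strict Implicit. Unset Printing Implicit Defensive.

Definition ceil_div (m d : nat) : nat := (m + d.-1) %/ d.

(* Main.v *)
Require Import Defs.
From mathcomp Require Import all_boot.
From mathcomp Require Import zify.

Theorem lemma8 (n m : nat) :
  1 < n -> 1 <= m <= n * (n - 1) ->
  let a := ceil_div m (n - 1) in
  let b := n - ((m - 1) %% n) in
  [/\ 1 <= a <= n, 1 <= b <= n & a != b].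
Proof.
move=> Hn /andP[Hm1 Hm2] a b.
rewrite /a /b /ceil_div.
have Hd : 0 < n - 1 by lia.
have E1 := divn_eq (m + (n-1).-1) (n-1).
have E1' := ltn_pmod (m + (n-1).-1) Hd.
have E2 := divn_eq (m - 1) n.
have E2' : (m - 1) %% n < n by apply: ltn_pmod; lia.
move: E1 E1' E2 E2' Hm2 Hd.
set d := n - 1.
have -> : n = d.+1 by rewrite /d; lia.
clearbody d.
move: ((m + d.+1.-1.-1) %/ d.+1.-1) ((m + d.+1.-1.-1) %% d.+1.-1)
   ((m - 1) %/ d.+1) ((m - 1) %% d.+1) => A r q s /= E1 E1' E2 E2' Hm2 Hd.
have HA1 : 1 <= A.
  case: A E1 => [|A'] E1 //; lia.
have HAn : A <= d.+1.
  case: (leqP A d.+1) => // H; exfalso.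
  have : d.+2 * d <= A * d by apply: leq_mul.
  lia.
have Hq : q < d.
  case: (leqP d q) => // H; exfalso.
  have : d * d.+1 <= q * d.+1 by apply: leq_mul.
  lia.
split; [by rewrite HA1 HAn | apply/andP; split; lia |].
apply/eqP => Heq.
have Hu : A = (d - s).+1 by lia.
rewrite Hu in E1.
move: (d - s) Hu E1 => u Hu E1.
case: (leqP u q) => H.
- have : u * d <= q * d by apply: leq_mul.
  lia.
- have : q.+1 * d <= u * d by apply: leq_mul.
  lia.
Qed.
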